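(* Each of the following six sets is a rational Diophantine sextuple, i.e. consists of six distinct positive rational numbers such that for any two distinct elements $x,y$ of the set, $xy+1$ is the square of a rational number: $$\left\{\tfrac{17}{448},\ \tfrac{265}{448},\ \tfrac{2145}{448},\ 252,\ \tfrac{23460}{7},\ \tfrac{2352}{7921}\right\},$$ $$\left\{\tfrac{9}{44},\ \tfrac{91}{132},\ \tfrac{60}{11},\ \tfrac{44}{3},\ \tfrac{1265}{12},\ \tfrac{4420}{3993}\right\},$$ $$\left\{\tfrac{3}{80},\ \tfrac{55}{16},\ \tfrac{28}{5},\ \tfrac{1683}{80},\ 1680,\ \tfrac{2220}{6889}\right\},$$ $$\left\{\tfrac{47}{60},\ \tfrac{287}{240},\ \tfrac{225}{64},\ \tfrac{1463}{60},\ \tfrac{512}{15},\ \tfrac{225}{1156}\right\},$$ $$\left\{\tfrac{27}{1856},\ \tfrac{2065}{5568},\ \tfrac{116}{3},\ \tfrac{23693}{192},\ \tfrac{12880}{87},\ \tfrac{21420}{229709}\right\},$$ $$\left\{\tfrac{21}{352},\ \tfrac{237}{352},\ \tfrac{280}{33},\ \tfrac{1573}{96},\ \tfrac{4680}{11},\ \tfrac{398090}{236883}\right\}.$$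
   Context: A rational Diophantine $m$-tuple is a set of $m$ distinct positive rational numbers such that the product of any two distinct elements, plus $1$, is the square of a rational number. A sextuple is the case $m=6$. *)

(* Defs.v *)
From mathcomp Require Import all_boot all_order all_algebra.
Set Implicit Arguments. Unset Strict Implicit. Unset Printing Implicit Defensive.
Import Order.TTheory GRing.Theory Num.Theory.
Local Open Scope ring_scope.

Definition is_rat_square (q : rat) : Prop := exists r : rat, r ^+ 2 = q.

Definition rat_diophantine_tuple (m : nat) (s : seq rat) : Prop :=
  [/\ size s = m, uniq s, all (fun x => 0 < x) s &
      forall x y, x \in s -> y \in s -> x != y -> is_rat_square (x * y + 1)].

Definition rat_diophantine_sextuple (s : seq rat) : Prop :=
  rat_diophantine_tuple 6 s.

(* Binary-encoded positive numerals mapped into rat, so that large numerals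
   such as 229709 do not have to be parsed as unary nat terms (which
   overflows the stack). [Qpos p] is the rational number equal to the
   positive integer p. *)
From Stdlib Require Import PArith.
Fixpoint Qpos (p : positive) : rat :=
  match p with
  | xH => 1
  | xO q => 2 * Qpos q
  | xI q => 2 * Qpos q + 1
  end.

Definition qfrac (a b : positive) : rat := Qpos a / Qpos b.

(* Main.v *)
Require Import Defs.
From mathcomp Require Import all_boot all_order all_algebra.
From Stdlib Require Import PArith.
From mathcomp Require Import ring.
From HB Require Import structures.
Import Order.TTheory GRing.Theory Num.Theory.
Local Open Scope ring_scope.

Lemma QposE p : Qpos p = (Pos.to_nat p)%:R :> rat.
Proof.
elim: p => [p IH|p IH|] /=.
- rewrite Pos2Nat.inj_xI IH -[(2 * Pos.to_nat p)%coq_nat]/(muln 2 (Pos.to_nat p)) -[in RHS]natr1 natrM; ring.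
- rewrite Pos2Nat.inj_xO IH -[(2 * Pos.to_nat p)%coq_nat]/(muln 2 (Pos.to_nat p)) natrM; ring.
- by [].
Qed.

Lemma Qpos_mul p q : Qpos (p * q) = Qpos p * Qpos q.
Proof. by rewrite !QposE Pos2Nat.inj_mul -natrM. Qed.
Lemma Qpos_add p q : Qpos (p + q) = Qpos p + Qpos q.
Proof. by rewrite !QposE Pos2Nat.inj_add -natrD. Qed.
Lemma Qpos_gt0 p : (0 < Qpos p)%R.
Proof. rewrite QposE ltr0n; have := Pos2Nat.is_pos p; by move/ssrnat.ltP. Qed.
Lemma Qpos_neq0 p : Qpos p != 0.
Proof. by rewrite gt_eqF // Qpos_gt0. Qed.
Lemma Qpos_inj p q : Qpos p = Qpos q -> p = q.
Proof. by rewrite !QposE => /eqP; rewrite eqr_nat => /eqP /Pos2Nat.inj. Qed.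

HB.instance Definition _ := Equality.copy positive (can_type Pos2Nat.id).
Definition pfrac := (positive * positive)%type.
Definition toq (x : pfrac) := qfrac x.1 x.2.
Definition peq (x y : pfrac) := Pos.eqb (x.1 * y.2)%positive (y.1 * x.2)%positive.
Definition sqok (x y : pfrac) :=
  let n := (x.1 * y.1 + x.2 * y.2)%positive in
  let m := (x.2 * y.2)%positive in
  let e := Pos.sqrt (n * m)%positive in Pos.eqb (e * e)%positive (n * m)%positive.

Lemma toq_eq x y : toq x = toq y -> peq x y.
Proof.
case: x y => [a b] [c d]; rewrite /toq /qfrac /peq /= => H.
apply/Pos.eqb_eq/Qpos_inj; rewrite !Qpos_mul.
have hb := Qpos_neq0 b; have hd := Qpos_neq0 d.
by move/eqP: H; rewrite eqr_div // => /eqP.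
Qed.

Lemma sq_ok x y : sqok x y -> is_rat_square (toq x * toq y + 1).
Proof.
case: x y => [a b] [c d]; rewrite /sqok /toq /qfrac /= => /Pos.eqb_eq H.
set e := Pos.sqrt _ in H.
exists (Qpos e / Qpos (b * d)%positive).
have := congr1 Qpos H; rewrite !Qpos_mul Qpos_add ?Qpos_mul => He.
have hb := Qpos_neq0 b; have hd := Qpos_neq0 d.
rewrite expr2 mulf_div He.
by field; rewrite hb hd.
Qed.

Definition check (L : seq pfrac) :=
  [&& size L == 6, pairwise (fun x y => ~~ peq x y) L &
   all (fun x => all (fun y => peq x y || sqok x y) L) L].

Lemma checkP L : check L -> rat_diophantine_sextuple (map toq L).
Proof.
case/and3P => /eqP hs hp ha; split.
- by rewrite size_map.
- rewrite uniq_pairwise pairwise_map; apply: sub_pairwise hp => x y /= h.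
  by apply/eqP => /toq_eq; rewrite (negbTE h).
- apply/allP => z. case/seq.mapP => x _ ->. exact: (divr_gt0 (Qpos_gt0 _) (Qpos_gt0 _)).
- move=> _ _ /seq.mapP [x hx ->] /seq.mapP [y hy ->] hne.
  have := allP (allP ha x hx) y hy; case/orP => h; last exact: sq_ok.
  exfalso; move/eqP: hne; apply.
  case: x y h {hx hy} => [a b] [c d]; rewrite /peq /toq /qfrac /= => /Pos.eqb_eq h.
  have := congr1 Qpos h; rewrite !Qpos_mul => h'.
  have hb := Qpos_neq0 b; have hd := Qpos_neq0 d.
  apply/eqP; rewrite eqr_div // h' //.
Qed.

Local Open Scope positive_scope.

Theorem mainTheorem2 :
  rat_diophantine_sextuple
    [:: qfrac 17 448; qfrac 265 448; qfrac 2145 448; qfrac 252 1;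
        qfrac 23460 7; qfrac 2352 7921] /\
  rat_diophantine_sextuple
    [:: qfrac 9 44; qfrac 91 132; qfrac 60 11; qfrac 44 3;
        qfrac 1265 12; qfrac 4420 3993] /\
  rat_diophantine_sextuple
    [:: qfrac 3 80; qfrac 55 16; qfrac 28 5; qfrac 1683 80;
        qfrac 1680 1; qfrac 2220 6889] /\
  rat_diophantine_sextuple
    [:: qfrac 47 60; qfrac 287 240; qfrac 225 64; qfrac 1463 60;
        qfrac 512 15; qfrac 225 1156] /\
  rat_diophantine_sextuple
    [:: qfrac 27 1856; qfrac 2065 5568; qfrac 116 3; qfrac 23693 192;
        qfrac 12880 87; qfrac 21420 229709] /\
  rat_diophantine_sextuple
    [:: qfrac 21 352; qfrac 237 352; qfrac 280 33; qfrac 1573 96;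
        qfrac 4680 11; qfrac 398090 236883].
Proof.
split; [|split; [|split; [|split; [|split]]]].
- exact: (@checkP [:: (17,448); (265,448); (2145,448); (252,1); (23460,7); (2352,7921)] (erefl true)).
- exact: (@checkP [:: (9,44); (91,132); (60,11); (44,3); (1265,12); (4420,3993)] (erefl true)).
- exact: (@checkP [:: (3,80); (55,16); (28,5); (1683,80); (1680,1); (2220,6889)] (erefl true)).
- exact: (@checkP [:: (47,60); (287,240); (225,64); (1463,60); (512,15); (225,1156)] (erefl true)).
- exact: (@checkP [:: (27,1856); (2065,5568); (116,3); (23693,192); (12880,87); (21420,229709)] (erefl true)).
- exact: (@checkP [:: (21,352); (237,352); (280,33); (1573,96); (4680,11); (398090,236883)] (erefl true)).
Qed.
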